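(* Let $p$ be an odd prime, $r\ge3$ with $p\nmid r$, let $V_1=\mathbb{Z}_p^{d_1}$, $V_2=\mathbb{Z}_p^{d_2}$, and let $G=(V_1\times V_2)\rtimes_{(\psi_1,\psi_2)}\mathrm{D}_{2r}$, where $\psi_i:\mathrm{D}_{2r}\to\mathrm{GL}(V_i)$ is irreducible over $\mathbb{F}_p$ for $i=1,2$. If $G$ has a rotary pair $(\rho,\tau)$ with $|\rho|=2p$ and $|\tau|=2$, then $\psi_1\not\cong\psi_2$.
   Context: A rotary pair of $G$ is $(\rho,\tau)\in G\times G$ with $G=\langle\rho,\tau\rangle$ and $|\tau|=2$. $(V_1\times V_2)\rtimes_{(\psi_1,\psi_2)}\mathrm{D}_{2r}$ is the semidirect product in which $\mathrm{D}_{2r}$ acts on $V_i=\mathbb{F}_p^{d_i}$ via $\psi_i$ componentwise. *)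

(* Defs.v *)
From HB Require Import structures.
From mathcomp Require Import all_boot all_order all_algebra all_fingroup all_solvable all_field all_character.
Set Implicit Arguments. Unset Strict Implicit. Unset Printing Implicit Defensive.
Import GRing.Theory.
Local Open Scope group_scope.

(* The group  (V1 x V2) ><|_(psi1,psi2) D  with V_i = 'rV[F]_(n_i) and
   D acting on V_i through the (row-vector) representation psi_i. *)
Variant sdp2 (F : finFieldType) (gT : finGroupType) (n1 n2 : nat)
    (psi1 : mx_representation F [set: gT]%G n1)
    (psi2 : mx_representation F [set: gT]%G n2) : predArgType :=
  SDP2 of ('rV[F]_n1 * 'rV[F]_n2 * gT).
Arguments sdp2 {F gT n1 n2} psi1 psi2.
Arguments SDP2 {F gT n1 n2 psi1 psi2}.

Section SemiDirect.
Variables (F : finFieldType) (gT : finGroupType) (n1 n2 : nat).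
Variables (psi1 : mx_representation F [set: gT]%G n1)
          (psi2 : mx_representation F [set: gT]%G n2).

Local Notation sdp2 := (sdp2 psi1 psi2).
Definition sdp2_val (u : sdp2) := let: SDP2 x := u in x.
HB.instance Definition _ := [isNew for sdp2_val].
HB.instance Definition _ := [Finite of sdp2 by <:].

Local Notation "u `1" := (sdp2_val u).1.1 (at level 2).
Local Notation "u `2" := (sdp2_val u).1.2 (at level 2).
Local Notation "u `3" := (sdp2_val u).2 (at level 2).

(* (v, g) * (w, h) = (v psi(h) + w, g h) ; (0,g)^-1 (v,1) (0,g) = (v psi(g), 1) *)
Definition sdp2_mul (u w : sdp2) : sdp2 :=
  SDP2 (((u`1 *m psi1 w`3) + w`1)%R, ((u`2 *m psi2 w`3) + w`2)%R, u`3 * w`3).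
Definition sdp2_one : sdp2 := SDP2 (0%R, 0%R, 1).
Definition sdp2_inv (u : sdp2) : sdp2 :=
  SDP2 ((- (u`1 *m psi1 ((u`3)^-1)%g))%R, (- (u`2 *m psi2 ((u`3)^-1)%g))%R, (u`3)^-1).

Lemma sdp2_mulgA : associative sdp2_mul.
Proof.
case=> [[[a1 a2] x]] [[[b1 b2] y]] [[[c1 c2] z]]; rewrite /sdp2_mul /=.
by rewrite !repr_mxM ?inE // !mulmxDl !mulmxA !addrA mulgA.
Qed.

Lemma sdp2_mul1g : left_id sdp2_one sdp2_mul.
Proof.
by case=> [[[a1 a2] x]]; rewrite /sdp2_mul /= !mul0mx !add0r mul1g.
Qed.

Lemma sdp2_mulVg : left_inverse sdp2_one sdp2_inv sdp2_mul.
Proof.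
case=> [[[a1 a2] x]]; rewrite /sdp2_mul /sdp2_inv /sdp2_one /=.
by rewrite !mulNmx -!mulmxA -!repr_mxM ?inE // mulVg !repr_mx1 !mulmx1 !addNr.
Qed.

HB.instance Definition _ := Finite_isGroup.Build sdp2
  sdp2_mulgA sdp2_mul1g sdp2_mulVg.
End SemiDirect.

Definition rotary_pair (gT : finGroupType) (rho tau : gT) : Prop :=
  <<[set rho; tau]>> = [set: gT] /\ #[tau] = 2%N.

(* Main.v *)
Require Import Defs.
From HB Require Import structures.
From mathcomp Require Import all_boot all_order all_algebra all_fingroup all_solvable all_field all_character.
From mathcomp Require Import ring.
Set Implicit Arguments. Unset Strict Implicit. Unset Printing Implicit Defensive.
Import GRing.Theory.

Local Open Scope group_scope.

Lemma gen2_all (gT : finGroupType) (s t : gT) (X : {set gT}) :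
  <<[set s; t]>> = [set: gT] -> 1 \in X ->
  (forall x y, x \in X -> y \in X -> x * y \in X) -> s \in X -> t \in X ->
  forall g, g \in X.
Proof.
move=> gen X1 XM Xs Xt g.
have gX : group_set X by apply/group_setP; split => // x y; apply: XM.
have : <<[set s; t]>> \subset (Group gX).
  by rewrite gen_subG subUset !sub1set Xs Xt.
by rewrite gen => /subsetP /(_ g (in_setT g)).
Qed.

Lemma card_comm2 (gT : finGroupType) (s t : gT) :
  commute s t -> s ^+ 2 = 1 -> t ^+ 2 = 1 -> #|<<[set s; t]>>| <= 4.
Proof.
move=> cst s2 t2.
have -> : <<[set s; t]>> = <[s]> <*> <[t]> by rewrite joing_idl joing_idr.
rewrite cent_joinEr; last first.
  by rewrite cycle_subG; apply/centP => u /cycleP[k ->]; apply: commuteX; apply: commute_sym.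
have := mul_cardG <[s]> <[t]>.
have os : #[s] <= 2 by apply: dvdn_leq => //; rewrite order_dvdn s2.
have ot : #[t] <= 2 by apply: dvdn_leq => //; rewrite order_dvdn t2.
rewrite -!orderE => e.
have : #|(<[s]> * <[t]>)%g| <= #[s] * #[t].
  rewrite e; apply: leq_pmulr; apply/card_gt0P; exists 1; rewrite group1 //.
move/leq_trans; apply; exact: (leq_mul os ot).
Qed.

Lemma dih_facts (r p : nat) (s t : 'D_(r.*2)) :
  prime p -> ~~ (p %| r) -> 2 < r ->
  <<[set s; t]>> = [set: 'D_(r.*2)] -> t ^+ 2 = 1 -> s ^+ (p.*2) = 1 ->
  s ^+ 2 = 1 /\ (s * t) ^+ r = 1.
Proof.
move=> pp pr r3 gen t2 s2p.
have r1 : 1 < r by apply: ltnW.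
case/existsP: (isoGrp_hom (Grp_dihedral r1)) => [[x y]] /= /eqP[defD xr y2 xy].
have yV : y^-1 = y by apply/eqP; rewrite eq_invg_mul; apply/eqP; rewrite -y2 expgS expg1.
have yy : y * y = 1 by rewrite -y2 expgS expg1.
have nxy : <[y]> \subset 'N(<[x]>) by rewrite norms_cycle xy groupV cycle_id.
have DE : forall g : 'D_(r.*2), g \in <[x]> * <[y]>.
  by move=> g; rewrite -norm_joinEr // defD inE.
have rotJ : forall a, a \in <[x]> -> a ^ y = a^-1.
  by move=> a /cycleP[i ->]; rewrite conjXg xy expgVn.
have rotr : forall a, a \in <[x]> -> a ^+ r = 1.
  by move=> a /cycleP[i ->]; rewrite -expgM mulnC expgM xr expg1n.
have ycase : forall b, b \in <[y]> -> b = 1 \/ b = y.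
  move=> b /cycleP[k ->]; rewrite -(expg_mod k y2).
  have : k %% 2 < 2 by rewrite ltn_pmod.
  by case: (k %% 2) => [|[|//]] _; [left | right; rewrite expg1].
have Dgen : <<[set x; y]>> = [set: 'D_(r.*2)] by rewrite -defD joing_idl joing_idr.
have central : forall a, a \in <[x]> -> a ^+ 2 = 1 -> forall g, commute a g.
  move=> a ax a2 g.
  have aV : a^-1 = a by apply/eqP; rewrite eq_invg_mul; apply/eqP; rewrite -a2 expgS expg1.
  have Cx : x \in 'C[a].
    by apply/cent1P; move: ax => /cycleP[i ->]; apply: commuteX.
  have Cy : y \in 'C[a].
    apply/cent1P; rewrite /commute.
    have ay : y * a * y = a.
      by rewrite -{2}aV -(rotJ a ax) /conjg yV mulgA.
    by rewrite -{2}ay -!mulgA yy mulg1.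
  have := @gen2_all _ x y 'C[a] Dgen (group1 _) (fun u v => @groupM _ _ u v) Cx Cy g.
  by move/cent1P; apply: commute_sym.
have small : commute s t -> s ^+ 2 = 1 -> False.
  move=> cst s2; have := card_comm2 cst s2 t2.
  rewrite gen; have cD : #|[set: 'D_(r.*2)]| = r.*2 := card_dihedral r1.
  by rewrite cD -addnn; apply/negP; rewrite -ltnNge; exact: leq_trans (leq_add r3 r3).
have [a1 b1 ax1 yb1 def_s] := mulsgP (DE s).
have [a2 b2 ax2 yb2 def_t] := mulsgP (DE t).
have refl2 : forall a, a \in <[x]> -> (a * y) ^+ 2 = 1.
  by move=> a ax; rewrite expgS expg1 -mulgA -{1}yV -/(conjg a y) rotJ // mulgV.
case: (ycase b1 yb1) => eb1; subst b1; rewrite ?mulg1 in def_s.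
  exfalso; subst s.
  have s2 : a1 ^+ 2 = 1.
    apply/eqP; rewrite -order_dvdn.
    have h1 : #[a1] %| r by rewrite order_dvdn rotr.
    have h2 : #[a1] %| p.*2 by rewrite order_dvdn s2p.
    have : #[a1] %| gcdn r (p.*2) by rewrite dvdn_gcd h1 h2.
    have g2 : gcdn r (p * 2) %| 2.
      by rewrite Gauss_gcdr ?dvdn_gcdr // coprime_sym prime_coprime.
    by move/dvdn_trans; apply; rewrite -muln2.
  exact: (small (central _ ax1 s2 t) s2).
case: (ycase b2 yb2) => eb2; subst b2; rewrite ?mulg1 in def_t.
  exfalso; subst t s.
  have s2 : (a1 * y) ^+ 2 = 1 by apply: refl2.
  exact: (small (commute_sym (central _ ax2 t2 _)) s2).
subst s t; split; first exact: refl2.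
apply: rotr.
have -> : a1 * y * (a2 * y) = a1 * a2^-1 by rewrite -(rotJ a2 ax2) /conjg yV !mulgA.
by rewrite groupM ?groupV.
Qed.

Lemma dfacts (gT : finGroupType) (s t : gT) : s ^+ 2 = 1 -> t ^+ 2 = 1 ->
  [/\ s^-1 = s, t^-1 = t, s * (s * t) = t,
      forall k, (s * t) ^+ k * s = s * (s * t) ^- k &
      forall k, (s * t) ^- k * s = s * (s * t) ^+ k].
Proof.
move=> s2 t2.
have sV : s^-1 = s by apply/eqP; rewrite eq_invg_mul; apply/eqP; rewrite -s2 expgS expg1.
have tV : t^-1 = t by apply/eqP; rewrite eq_invg_mul; apply/eqP; rewrite -t2 expgS expg1.
have sst : s * (s * t) = t by rewrite mulgA -{1}sV mulVg mul1g.
have cs : (s * t) ^ s = (s * t)^-1 by rewrite /conjg sV invMg sV tV !mulgA -{1}sV mulVg mul1g.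
have ck : forall k, ((s * t) ^+ k) ^ s = (s * t) ^- k by move=> k; rewrite conjXg cs expgVn.
split=> // k; first by rewrite conjgC ck.
by rewrite conjgC conjVg ck invgK.
Qed.

Lemma psiM (F : fieldType) (gT : finGroupType) (n : nat)
  (psi : mx_representation F [set: gT]%G n) (x y : gT) :
  psi (x * y) = (psi x *m psi y)%R.
Proof. by rewrite repr_mxM ?inE. Qed.

Lemma irr_full (F : fieldType) (gT : finGroupType) (n m : nat)
  (psi : mx_representation F [set: gT]%G n) (U : 'M[F]_(m, n)) :
  mx_irreducible psi -> mxmodule psi U -> (U != 0)%R -> ((1%:M)%R <= U)%MS.
Proof.
case=> _ _ irr modU U0.
have := irr <<U>>%MS; rewrite (eqmx_module _ (genmxE U)) (eqmx_eq0 (genmxE U)) genmxE.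
move=> h; rewrite -(genmxE U); exact: h (submx1 _) U0.
Qed.

Lemma stepA (F : fieldType) (gT : finGroupType) (n r : nat)
  (psi : mx_representation F [set: gT]%G n) (s t : gT) (e f : 'rV[F]_n) :
  (2%:R != 0 :> F)%R -> 0 < r -> mx_irreducible psi ->
  <<[set s; t]>> = [set: gT] -> s ^+ 2 = 1 -> t ^+ 2 = 1 -> (s * t) ^+ r = 1 ->
  (e *m psi s = e)%R -> (f *m psi s = f)%R -> (e != 0)%R ->
  exists A : 'M[F]_n, (forall g, psi g *m A = A *m psi g)%R /\ (e *m A = f)%R.
Proof.
move=> two0 r0 irr gen s2 t2 cr es fs e0.
have [sV tV sst cks cVks] := dfacts s2 t2.
set c := s * t in cr cks cVks sst.
pose U := (\matrix_(k < r) (e *m psi (c ^+ k)%g))%R.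
have inU : forall j, ((e *m psi (c ^+ j)%g)%R <= U)%MS.
  move=> j; rewrite -(expg_mod j cr).
  by have := row_sub (Ordinal (ltn_pmod j r0)) U; rewrite rowK.
have inUV : forall j, ((e *m psi (c ^- j)%g)%R <= U)%MS.
  by move=> j; rewrite -expgVn invg_expg -expgM.
have modU : mxmodule psi U.
  have HsU : ((U *m psi s)%R <= U)%MS.
    apply/row_subP => i.
    by rewrite row_mul rowK -mulmxA -psiM cks psiM mulmxA es.
  have HcU : ((U *m psi c)%R <= U)%MS.
    apply/row_subP => i.
    by rewrite row_mul rowK -mulmxA -psiM -expgSr.
  apply/mxmoduleP => g _.
  pose X := [set g | ((U *m psi g)%R <= U)%MS].
  have : g \in X.
    apply: (gen2_all gen).
    - by rewrite inE repr_mx1 mulmx1 submx_refl.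
    - move=> x y; rewrite !inE => Hx Hy; rewrite psiM mulmxA.
      exact: submx_trans (submxMr _ Hx) Hy.
    - by rewrite inE.
    - rewrite -sst inE psiM mulmxA.
      exact: submx_trans (submxMr _ HsU) HcU.
  by rewrite inE.
have U0 : (U != 0)%R.
  apply/eqP => U0; move/eqP: e0; apply.
  have := rowK (fun k : 'I_r => e *m psi (c ^+ k)%g)%R (Ordinal r0).
  by rewrite -/U U0 row0 /= expg0 repr_mx1 mulmx1 => <-.
have full := irr_full irr modU U0.
have /submxP [a fa] : (f <= U)%MS := submx_trans (submx1 f) full.
pose G := (\sum_(k < r) a 0 k *: psi (c ^+ k)%g)%R.
pose G' := (\sum_(k < r) a 0 k *: psi (c ^- k)%g)%R.
have fG : f = (e *m G)%R.
  rewrite fa mulmx_sum_row mulmx_sumr; apply: eq_bigr => k _.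
  by rewrite rowK scalemxAr.
have GP : (G *m psi s = psi s *m G')%R.
  rewrite mulmx_suml mulmx_sumr; apply: eq_bigr => k _.
  by rewrite -scalemxAl -scalemxAr -!psiM cks.
have G'P : (G' *m psi s = psi s *m G)%R.
  rewrite mulmx_suml mulmx_sumr; apply: eq_bigr => k _.
  by rewrite -scalemxAl -scalemxAr -!psiM cVks.
have fG' : f = (e *m G')%R.
  by rewrite -{1}es -mulmxA -GP mulmxA -fG fs.
exists ((2%:R)^-1 *: (G + G'))%R; split; last first.
  by rewrite -scalemxAr mulmxDr -fG -fG' -mulr2n -scaler_nat scalerA mulVf // scale1r.
move=> g.
pose X := [set g | (psi g *m ((2%:R)^-1 *: (G + G')) == ((2%:R)^-1 *: (G + G')) *m psi g)%R].
have : g \in X.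
  apply: (gen2_all gen).
  - by rewrite inE repr_mx1 mulmx1 mul1mx.
  - move=> x y; rewrite !inE => /eqP Hx /eqP Hy.
    by rewrite psiM -mulmxA Hy !mulmxA Hx.
  - rewrite inE -scalemxAl -scalemxAr mulmxDl mulmxDr GP G'P addrC.
    done.
  - rewrite -sst inE psiM -mulmxA.
    have cG : forall H : 'I_r -> 'M[F]_n, (forall k, psi c *m H k = H k *m psi c)%R ->
       (psi c *m \sum_(k < r) a 0 k *: H k = (\sum_(k < r) a 0 k *: H k) *m psi c)%R.
      move=> H hH; rewrite mulmx_suml mulmx_sumr; apply: eq_bigr => k _.
      by rewrite -scalemxAl -scalemxAr hH.
    have -> : (psi c *m ((2%:R)^-1 *: (G + G')) = ((2%:R)^-1 *: (G + G')) *m psi c)%R.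
      rewrite -scalemxAl -scalemxAr mulmxDl mulmxDr; congr (_ *: (_ + _))%R.
        by apply: cG => k; rewrite -!psiM; congr (psi _); apply: commuteX.
      by apply: cG => k; rewrite -!psiM; congr (psi _); apply: commuteV; apply: commuteX.
    rewrite !mulmxA; apply/eqP; congr (_ *m _)%R.
    rewrite -scalemxAl -scalemxAr mulmxDl mulmxDr GP G'P addrC.
    done.
by rewrite inE => /eqP.
Qed.

Local Close Scope group_scope.
Local Open Scope ring_scope.

Lemma core (F : fieldType) (gT : finGroupType) (n r : nat)
  (psi : mx_representation F [set: gT]%G n) (s t : gT) :
  (2%:R != 0 :> F) -> (0 < r)%N -> mx_irreducible psi ->
  <<[set s; t]>>%g = [set: gT] -> (s ^+ 2 = 1)%g -> (t ^+ 2 = 1)%g -> ((s * t) ^+ r = 1)%g ->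
  forall v1 v2 w1 w2 : 'rV[F]_n,
  w1 *m psi t = - w1 -> w2 *m psi t = - w2 ->
  exists A1 A2 : 'M[F]_n, exists z : 'rV[F]_n,
   [/\ forall g, psi g *m A1 = A1 *m psi g, forall g, psi g *m A2 = A2 *m psi g,
       (A1 != 0) || (A2 != 0),
       v1 *m A1 + v2 *m A2 = z - z *m psi s &
       w1 *m A1 + w2 *m A2 = z - z *m psi t].
Proof.
move=> two0 r0 irr gen s2 t2 cr v1 v2 w1 w2 w1t w2t.
have [sV tV sst cks cVks] := dfacts s2 t2.
set c := (s * t)%g in cr cks cVks sst.
have one0 : (1%:M : 'M[F]_n) != 0 by case: irr.
have PP : psi s *m psi s = 1%:M by rewrite -psiM -{1}sV mulVg repr_mx1.
have QQ : psi t *m psi t = 1%:M by rewrite -psiM -{1}tV mulVg repr_mx1.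
have QPR : psi t = psi s *m psi c by rewrite -psiM sst.
have QP : psi t *m psi s = psi (c^-1)%g by rewrite -psiM /c invMg sV tV.
have RP : psi c *m psi s = psi s *m psi (c^-1)%g by rewrite -!psiM -(expg1 c) cks.
have R'P : psi (c^-1)%g *m psi s = psi s *m psi c by rewrite -!psiM -(expg1 c) cVks expg1.
have RR' : psi c *m psi (c^-1)%g = 1%:M by rewrite -psiM mulgV repr_mx1.
have R'R : psi (c^-1)%g *m psi c = 1%:M by rewrite -psiM mulVg repr_mx1.
pose S := (1%:M - psi c) + (1%:M - psi (c^-1)%g).
have comP : forall A : 'M[F]_n, (forall g, psi g *m A = A *m psi g) ->
   forall x : 'rV[F]_n, forall g, x *m A *m psi g = x *m psi g *m A.
  by move=> A cA x g; rewrite -!mulmxA cA.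
case: (boolP (S \in unitmx)) => Su.
  pose x1 := v1 + v1 *m psi s; pose x2 := v2 + v2 *m psi s.
  have xP : forall v : 'rV[F]_n, (v + v *m psi s) *m psi s = v + v *m psi s.
    by move=> v; rewrite mulmxDl -mulmxA PP mulmx1 addrC.
  have [A1 [A2 [c1 c2 nz kill]]] : exists A1 A2 : 'M[F]_n,
      [/\ forall g, psi g *m A1 = A1 *m psi g, forall g, psi g *m A2 = A2 *m psi g,
       (A1 != 0) || (A2 != 0) & x1 *m A1 + x2 *m A2 = 0].
    case: (eqVneq x1 0) => x10.
      exists 1%:M, 0; split => //.
      - by move=> g; rewrite mulmx1 mul1mx.
      - by move=> g; rewrite mulmx0 mul0mx.
      - by rewrite one0.
      - by rewrite x10 mul0mx mulmx0 addr0.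
    have fP : (- x2) *m psi s = - x2 by rewrite mulNmx xP.
    have [A [cA eA]] := stepA two0 r0 irr gen s2 t2 cr (xP v1) fP x10.
    exists A, 1%:M; split => //.
    - by move=> g; rewrite mulmx1 mul1mx.
    - by rewrite one0 orbT.
    - by rewrite eA mulmx1 addNr.
  pose a := v1 *m A1 + v2 *m A2; pose b := w1 *m A1 + w2 *m A2.
  have aP : a *m psi s = - a.
    have e : a + a *m psi s = x1 *m A1 + x2 *m A2.
      rewrite /a /x1 /x2 mulmxDl !comP // !mulmxDl.
      apply/rowP => j; rewrite !mxE; ring.
    by apply/eqP; rewrite -addr_eq0 addrC e kill.
  have bQ : b *m psi t = - b.
    by rewrite /b mulmxDl !comP // w1t w2t !mulNmx opprD.
  pose K := invmx S.
  have KS : K *m S = 1%:M by rewrite mulVmx.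
  have SP : S *m psi s = psi s *m S.
    rewrite /S !(mulmxDl, mulmxDr, mulNmx, mulmxN, mul1mx, mulmx1) RP R'P.
    by rewrite addrC.
  have KP : K *m psi s = psi s *m K.
    rewrite -[K *m psi s]mulmx1 -(mulmxV Su) !mulmxA -(mulmxA K) -SP.
    by rewrite (mulmxA K) KS mul1mx.
  pose a' := a - 2%:R^-1 *: (b - b *m psi s).
  have a'P : a' *m psi s = - a'.
    rewrite /a' mulmxBl aP -scalemxAl mulmxBl -mulmxA PP mulmx1.
    apply/rowP => j; rewrite !mxE; ring.
  pose y := a' *m K.
  have yP : y *m psi s = - y by rewrite /y -mulmxA KP mulmxA a'P mulNmx.
  have yS : y *m S = a' by rewrite /y -mulmxA KS mulmx1.
  have bdef : w1 *m A1 + w2 *m A2 = b by [].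
  have adef : v1 *m A1 + v2 *m A2 = y *m S + 2%:R^-1 *: (b - b *m psi s).
    by rewrite yS /a' subrK.
  clearbody y a' b.
  exists A1, A2, (2%:R^-1 *: b + y + y *m psi t); split => //; rewrite ?bdef ?adef.
    have yQ : y *m psi t = - (y *m psi c) by rewrite QPR mulmxA yP mulNmx.
    rewrite /S mulmxDr !mulmxBr !mulmx1.
    rewrite !mulmxDl -scalemxAl -mulmxA QP yP yQ.
    apply/rowP => j; rewrite !mxE; field; done.
  rewrite !mulmxDl -scalemxAl bQ -mulmxA QQ mulmx1.
  apply/rowP => j; rewrite !mxE; field; done.
have [x x0 xS] : exists2 x : 'rV[F]_n, x != 0 & x *m S = 0.
  exists (nz_row (kermx S)); first by rewrite nz_row_eq0 kermx_eq0 row_free_unit.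
  by apply/sub_kermxP; apply: nz_row_sub.
have [f0 f00 f0R] : exists2 f0 : 'rV[F]_n, f0 != 0 & f0 *m psi c = f0.
  case: (eqVneq (x - x *m psi c) 0) => y0.
    by exists x => //; apply/eqP; rewrite eq_sym -subr_eq0 y0.
  exists (x - x *m psi c) => //.
  have e1 : (x - x *m psi c) - (x - x *m psi c) *m psi (c^-1)%g = x *m S.
    rewrite /S mulmxDr !mulmxBr !mulmxBl -mulmxA RR' !mulmx1.
    apply/rowP => j; rewrite !mxE; ring.
  have e2 : (x - x *m psi c) *m psi (c^-1)%g = x - x *m psi c.
    by apply/eqP; rewrite eq_sym -subr_eq0 e1 xS.
  by rewrite -{1}e2 -mulmxA R'R mulmx1.
have f0R' : f0 *m psi (c^-1)%g = f0 by rewrite -{1}f0R -mulmxA RR' mulmx1.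
have [e e0 [eR [k eP]]] : exists2 e : 'rV[F]_n, e != 0 & ((e *m psi c = e) /\ (exists k : F, e *m psi s = k *: e)).
  have fPR : f0 *m psi s *m psi c = f0 *m psi s by rewrite -mulmxA -R'P mulmxA f0R'.
  case: (eqVneq (f0 + f0 *m psi s) 0) => e10.
    exists (f0 - f0 *m psi s).
      apply: contraNneq f00 => h.
      have : (f0 + f0 *m psi s) + (f0 - f0 *m psi s) = 0 by rewrite e10 h addr0.
      have -> : (f0 + f0 *m psi s) + (f0 - f0 *m psi s) = 2%:R *: f0.
        by apply/rowP => j; rewrite !mxE; ring.
      move/eqP; rewrite scalemx_eq0 => /orP[|//]; by rewrite (negPf two0).
    split; first by rewrite mulmxBl f0R fPR.
    exists (-1); rewrite mulmxBl -mulmxA PP mulmx1.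
    apply/rowP => j; rewrite !mxE; ring.
  exists (f0 + f0 *m psi s) => //.
  split; first by rewrite mulmxDl f0R fPR.
  exists 1; rewrite mulmxDl -mulmxA PP mulmx1 scale1r addrC //.
have modE : mxmodule psi e.
  apply/mxmoduleP => g _.
  pose X := [set g | ((e *m psi g)%R <= e)%MS].
  have : g \in X.
    apply: (gen2_all gen).
    - by rewrite inE repr_mx1 mulmx1 submx_refl.
    - move=> x' y'; rewrite !inE => Hx Hy; rewrite psiM mulmxA.
      exact: submx_trans (submxMr _ Hx) Hy.
    - by rewrite inE eP scalemx_sub.
    - by rewrite -sst inE psiM mulmxA eP -scalemxAl eR scalemx_sub.
  by rewrite inE.
have full := irr_full irr modE e0.
have span : forall u : 'rV[F]_n, exists g : F, u = g *: e.
  by move=> u; apply/sub_rVP; apply: submx_trans (submx1 u) full.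
pose u1 := v1 - 2%:R^-1 *: (w1 - w1 *m psi s).
pose u2 := v2 - 2%:R^-1 *: (w2 - w2 *m psi s).
have [A1 [A2 [c1 c2 nz kill]]] : exists A1 A2 : 'M[F]_n,
      [/\ forall g, psi g *m A1 = A1 *m psi g, forall g, psi g *m A2 = A2 *m psi g,
       (A1 != 0) || (A2 != 0) & u1 *m A1 + u2 *m A2 = 0].
  have [g1 eu1] := span u1; have [g2 eu2] := span u2.
  case: (boolP ((g1 == 0) && (g2 == 0))) => /= hg.
    exists 1%:M, 0; split => //.
    - by move=> g; rewrite mulmx1 mul1mx.
    - by move=> g; rewrite mulmx0 mul0mx.
    - by rewrite one0.
    - by case/andP: hg => /eqP g10 _; rewrite eu1 g10 scale0r mul0mx mulmx0 addr0.
  exists g2%:M, (- g1)%:M; split.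
  - by move=> g; rewrite scalar_mxC.
  - by move=> g; rewrite scalar_mxC.
  - rewrite -[g2%:M]scalemx1 -[(- g1)%:M]scalemx1 !scalemx_eq0 (negPf one0) !orbF oppr_eq0.
    by move: hg; rewrite negb_and => /orP[] ->; rewrite ?orbT.
  - rewrite eu1 eu2 !mul_mx_scalar !scalerA.
    apply/rowP => j; rewrite !mxE; ring.
pose b := w1 *m A1 + w2 *m A2.
have bQ : b *m psi t = - b.
  by rewrite /b mulmxDl (comP _ c1) (comP _ c2) w1t w2t !mulNmx opprD.
have adef : v1 *m A1 + v2 *m A2 = (u1 *m A1 + u2 *m A2) + 2%:R^-1 *: (b - b *m psi s).
  rewrite /u1 /u2 /b !(mulmxDl, mulNmx) -!scalemxAl !(mulmxDl, mulNmx) !(comP _ c1) !(comP _ c2).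
  move: (w1 *m psi s *m A1) (w2 *m psi s *m A2) (w1 *m A1) (w2 *m A2) (v1 *m A1) (v2 *m A2).
  by move=> X1 X2 X3 X4 X5 X6; apply/rowP => j; rewrite !mxE; ring.
have bdef : w1 *m A1 + w2 *m A2 = b by [].
clearbody b.
exists A1, A2, (2%:R^-1 *: b); split => //.
  by rewrite adef kill add0r -scalemxAl scalerBr.
rewrite bdef -scalemxAl bQ.
apply/rowP => j; rewrite !mxE; field; done.
Qed.

Local Close Scope ring_scope.

Lemma sdp2_valM (F : finFieldType) (gT : finGroupType) (n1 n2 : nat)
  (psi1 : mx_representation F [set: gT]%G n1)
  (psi2 : mx_representation F [set: gT]%G n2) (u w : sdp2 psi1 psi2) :
  sdp2_val (u * w)%g =
  ((((sdp2_val u).1.1 *m psi1 (sdp2_val w).2) + (sdp2_val w).1.1)%R,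
   (((sdp2_val u).1.2 *m psi2 (sdp2_val w).2) + (sdp2_val w).1.2)%R,
   ((sdp2_val u).2 * (sdp2_val w).2)%g).
Proof. by []. Qed.

Lemma sdp2_val1 (F : finFieldType) (gT : finGroupType) (n1 n2 : nat)
  (psi1 : mx_representation F [set: gT]%G n1)
  (psi2 : mx_representation F [set: gT]%G n2) :
  sdp2_val (1%g : sdp2 psi1 psi2) = (0%R, 0%R, 1%g).
Proof. by []. Qed.

Lemma sdp2_valX (F : finFieldType) (gT : finGroupType) (n1 n2 : nat)
  (psi1 : mx_representation F [set: gT]%G n1)
  (psi2 : mx_representation F [set: gT]%G n2) (u : sdp2 psi1 psi2) k :
  (sdp2_val (u ^+ k)%g).2 = ((sdp2_val u).2 ^+ k)%g.
Proof.
elim: k => [|k IH]; first by rewrite !expg0 sdp2_val1.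
by rewrite !expgS sdp2_valM /= IH.
Qed.

Theorem lemma6p4 (p r d1 d2 : nat)
  (psi1 : mx_representation 'F_p [set: 'D_(r.*2)]%G d1)
  (psi2 : mx_representation 'F_p [set: 'D_(r.*2)]%G d2) :
  prime p -> odd p -> 3 <= r -> ~~ (p %| r) ->
  mx_irreducible psi1 -> mx_irreducible psi2 ->
  (exists rho tau : sdp2 psi1 psi2,
      rotary_pair rho tau /\ #[rho]%g = p.*2 /\ #[tau]%g = 2) ->
  ~ mx_rsim psi1 psi2.
Proof.
move=> pp op r3 pr irr1 irr2 [rho [tau [[gen ot] [orho _]]]] [B ed freeB hB].
subst d2.
have Bu : B \in unitmx by rewrite -row_free_unit.
have hB' : forall x, (invmx B *m psi1 x = psi2 x *m invmx B)%R.
  move=> x; rewrite -[(invmx B *m psi1 x)%R]mulmx1 -(mulmxV Bu) mulmxA.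
  by rewrite -(mulmxA (invmx B)) hB ?inE // mulmxA mulVmx // mul1mx.
have two0 : (2%:R != 0 :> 'F_p)%R.
  rewrite -(dvdn_pcharf (pchar_Fp pp)); apply/negP => /(dvdn_leq (isT : 0 < 2)) p2.
  have p1 := prime_gt1 pp.
  have : p = 2 by apply/eqP; rewrite eqn_leq p2.
  by move=> e; rewrite e in op.
set s := (sdp2_val rho).2; set t := (sdp2_val tau).2.
set v1 := (sdp2_val rho).1.1; set v2 := (sdp2_val rho).1.2.
set w1 := (sdp2_val tau).1.1; set w2 := (sdp2_val tau).1.2.
have tau2 : (tau * tau = 1)%g by rewrite -(expgS tau 1) -ot expg_order.
have gen' : <<[set s; t]>>%g = [set: 'D_(r.*2)].
  apply/eqP; rewrite eqEsubset subsetT /=; apply/subsetP => g _.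
  pose X := [set u : sdp2 psi1 psi2 | (sdp2_val u).2 \in <<[set s; t]>>%g].
  have : (SDP2 (0%R, 0%R, g) : sdp2 psi1 psi2) \in X.
    apply: (gen2_all gen).
    - by rewrite inE sdp2_val1 group1.
    - by move=> x y; rewrite !inE sdp2_valM /=; apply: groupM.
    - by rewrite inE mem_gen // !inE eqxx.
    - by rewrite inE mem_gen // !inE eqxx orbT.
  by rewrite inE.
have t2 : (t ^+ 2 = 1)%g.
  have := congr1 (fun u => (sdp2_val u).2) tau2; rewrite sdp2_valM /= => h.
  by rewrite expgS expg1; exact: h.
have s2p : (s ^+ p.*2 = 1)%g.
  have := congr1 (fun u => (sdp2_val u).2) (expg_order rho); rewrite sdp2_valX orho /= => h.
  exact: h.
have [s2 cr] := dih_facts pp pr r3 gen' t2 s2p.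
have wt : (w1 *m psi1 t = - w1)%R /\ (w2 *m psi2 t = - w2)%R.
  have := congr1 (fun u => sdp2_val u) tau2; rewrite sdp2_valM sdp2_val1 => -[e1 e2 _].
  by split; apply/eqP; rewrite -addr_eq0; apply/eqP.
case: wt => w1t w2t.
have w2t' : ((w2 *m invmx B) *m psi1 t = - (w2 *m invmx B))%R.
  by rewrite -mulmxA hB' mulmxA w2t mulNmx.
have [A1 [A2 [z [c1 c2 nz e1 e2]]]] :=
  core two0 (ltnW (ltnW r3)) irr1 gen' s2 t2 cr v1 (v2 *m invmx B) w1t w2t'.
pose M2 := (invmx B *m A2)%R.
have cM2 : forall g, (psi2 g *m M2 = M2 *m psi1 g)%R.
  by move=> g; rewrite /M2 mulmxA -hB' -!mulmxA c2.
have M2def : M2 = (invmx B *m A2)%R by [].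
clearbody M2.
pose S := [set u : sdp2 psi1 psi2 |
  ((sdp2_val u).1.1 *m A1 + (sdp2_val u).1.2 *m M2 == z - z *m psi1 (sdp2_val u).2)%R].
have allS : forall x y, (SDP2 (x, y, 1%g) : sdp2 psi1 psi2) \in S.
  move=> x y; apply: (gen2_all gen).
  - by rewrite inE sdp2_val1 /= !mul0mx addr0 repr_mx1 mulmx1 subrr.
  - move=> u w; rewrite !inE sdp2_valM /= => /eqP Hu /eqP Hw.
    rewrite !mulmxDl -!mulmxA c1 cM2 !mulmxA.
    rewrite addrACA -mulmxDl Hu Hw psiM mulmxBl mulmxA.
    by apply/eqP; rewrite addrC addrA subrK.
  - by rewrite inE -/v1 -/v2 -/s M2def mulmxA e1.
  - by rewrite inE -/w1 -/w2 -/t M2def mulmxA e2.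
have kill : forall x y : 'rV['F_p]_d1, (x *m A1 + y *m M2 = 0)%R.
  move=> x y; have := allS x y; rewrite inE /= repr_mx1 mulmx1 subrr.
  by move/eqP.
have A10 : A1 = 0%R.
  apply/row_matrixP => i; rewrite row0 rowE.
  by have := kill (delta_mx ord0 i : 'rV['F_p]_d1) 0%R; rewrite mul0mx addr0.
have M20 : M2 = 0%R.
  apply/row_matrixP => i; rewrite row0 rowE.
  by have := kill 0%R (delta_mx ord0 i : 'rV['F_p]_d1); rewrite mul0mx add0r.
have A20 : A2 = 0%R.
  by rewrite -[A2]mul1mx -(mulmxV Bu) -mulmxA -M2def M20 mulmx0.
by move: nz; rewrite A10 A20 eqxx.
Qed.
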